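(* For every bipartite quantum channel $\mathcal{N}\in\mathrm{Ch}(A'B',AB)$, \[ S^{\downarrow}_{\infty}(R_AA|R_BB)_{\Phi^{\mathcal{N}}}-\log|A'|\ \le\ S_{\infty}[A|B]_{\mathcal{N}}\ \le\ S_{\infty}(R_AA|R_BB)_{\Phi^{\mathcal{N}}}-\log|A'|. \]
   Context: All systems are finite-dimensional; $|X|$ denotes dimension; $\log$ is base 2. $\mathrm{St}(X)$ is the set of density operators, $\mathrm{Ch}(X',X)$ the set of quantum channels. Maximally entangled state: $\Phi_{RX}:=\frac1d\sum_{i,j=0}^{d-1}|ii\rangle\langle jj|$ with $R\simeq X$, $d=|X|$. The Choi state of $\mathcal{N}\in\mathrm{Ch}(A'B',AB)$ is $\Phi^{\mathcal{N}}_{R_AAR_BB}:=(\mathrm{id}_{R_AR_B}\otimes\mathcal{N})(\Phi_{R_AA'}\otimes\Phi_{R_BB'})$, $R_A\simeq A'$, $R_B\simeq B'$. $\mathcal{R}^{\mathbb 1}_{A'\to A}(X):=\operatorname{tr}(X)\mathbb 1_A$. $D_\infty(\rho\|\sigma):=\log\inf\{\lambda\ge0:\rho\le\lambda\sigma\}$; for a channel $\mathcal{M}$ and CP map $\mathcal{M}'$ with the same input $X'$, $D_\infty[\mathcal{M}\|\mathcal{M}']:=\sup_{\rho\in\mathrm{St}(RX')}D_\infty((\mathrm{id}_R\otimes\mathcal{M})(\rho)\|(\mathrm{id}_R\otimes\mathcal{M}')(\rho))$. Conditional channel min-entropy: $S_\infty[A|B]_{\mathcal{N}}:=-\inf_{\mathcal{Q}\in\mathrm{Ch}(B',B)}D_\infty[\mathcal{N}\|\mathcal{R}^{\mathbb1}_{A'\to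 A}\otimes\mathcal{Q}_{B'\to B}]$. For a bipartite state $\rho_{XY}$: $S_\infty(X|Y)_\rho:=-\inf_{\sigma\in\mathrm{St}(Y)}D_\infty(\rho_{XY}\|\mathbb1_X\otimes\sigma_Y)$ and $S^\downarrow_\infty(X|Y)_\rho:=-D_\infty(\rho_{XY}\|\mathbb1_X\otimes\rho_Y)$. *)

(* Defs.v *)
From HB Require Import structures.
From mathcomp Require Import all_boot all_order all_algebra.
From mathcomp Require Import complex mxtens.
From mathcomp Require Import boolp classical_sets reals ereal exp.

Set Implicit Arguments.
Unset Strict Implicit.
Unset Printing Implicit Defensive.

Import Order.TTheory GRing.Theory Num.Theory.
Local Open Scope ring_scope.
Local Open Scope classical_set_scope.

Section QuantumDefs.
Variable R : realType.
Local Notation C := (R[i]).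

Definition log2 (x : R) : R := ln x / ln 2.

Definition adjmx m n (A : 'M[C]_(m, n)) : 'M[C]_(n, m) :=
  (map_mx (fun z : C => conjc z) A)^T.

Definition psd n (A : 'M[C]_n) : Prop :=
  forall v : 'cV[C]_n, 0 <= (adjmx v *m A *m v) 0 0.

Definition loewner_le n (A B : 'M[C]_n) : Prop := psd (B - A).

Definition is_state n (rho : 'M[C]_n) : Prop := psd rho /\ \tr rho = 1.

(* composite index of system XY with |X| = m, |Y| = n (convention of tensmx) *)
Definition tidx m n (i : 'I_m) (j : 'I_n) : 'I_(m * n) := mxtens_index (i, j).

Definition block m n (X : 'M[C]_(m * n)) (i j : 'I_m) : 'M[C]_n :=
  \matrix_(k, l) X (tidx i k) (tidx j l).

Definition tensmap n1 m1 n2 m2 (M1 : 'M[C]_n1 -> 'M[C]_m1)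
    (M2 : 'M[C]_n2 -> 'M[C]_m2) : 'M[C]_(n1 * n2) -> 'M[C]_(m1 * m2) :=
  fun X => \sum_(i < n1) \sum_(j < n1) (M1 (delta_mx i j) *t M2 (block X i j)).

Definition idmap n : 'M[C]_n -> 'M[C]_n := fun X => X.

Definition is_linear_map n m (M : 'M[C]_n -> 'M[C]_m) : Prop :=
  forall (a : C) X Y, M (a *: X + Y) = a *: M X + M Y.

Definition positive_map n m (M : 'M[C]_n -> 'M[C]_m) : Prop :=
  forall X, psd X -> psd (M X).

Definition completely_positive n m (M : 'M[C]_n -> 'M[C]_m) : Prop :=
  forall k : nat, positive_map (tensmap (@idmap k) M).

Definition trace_preserving n m (M : 'M[C]_n -> 'M[C]_m) : Prop :=
  forall X, \tr (M X) = \tr X.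

Definition is_channel n m (M : 'M[C]_n -> 'M[C]_m) : Prop :=
  [/\ is_linear_map M, completely_positive M & trace_preserving M].

Definition replacer1 n m : 'M[C]_n -> 'M[C]_m := fun X => (\tr X)%:M.

Definition ptrace1 m n (X : 'M[C]_(m * n)) : 'M[C]_n := \sum_(i < m) block X i i.

Definition maxent d : 'M[C]_(d * d) :=
  (d%:R)^-1 *: \sum_(i < d) \sum_(j < d) delta_mx (tidx i i) (tidx j j).

(* reordering (PQ)(RS) -> (PR)(QS) of tensor factors *)
Definition swapmid_idx p q r s (u : 'I_((p * r) * (q * s))) : 'I_((p * q) * (r * s)) :=
  let: (pr, qs) := mxtens_unindex u in
  let: (i, k) := mxtens_unindex pr in
  let: (j, l) := mxtens_unindex qs in
  tidx (tidx i j) (tidx k l).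

Definition swapmid p q r s (X : 'M[C]_((p * q) * (r * s))) : 'M[C]_((p * r) * (q * s)) :=
  \matrix_(u, v) X (swapmid_idx u) (swapmid_idx v).

(* Choi state Phi^N_{R_A A R_B B} of N in Ch(A'B', AB), as a bipartite
   operator on (R_A A)(R_B B):
   (id_{R_A R_B} (x) N)(Phi_{R_A A'} (x) Phi_{R_B B'}), with tensor factors
   reordered so that N acts on A'B'. *)
Definition choi a' b' a b (N : 'M[C]_(a' * b') -> 'M[C]_(a * b))
    : 'M[C]_((a' * a) * (b' * b)) :=
  swapmid (tensmap (@idmap (a' * b')) N (swapmid (maxent a' *t maxent b'))).

Local Open Scope ereal_scope.

(* max-relative entropy D_infty(rho||sigma) = log inf {lam >= 0 : rho <= lam sigma}
   (inf of the empty set = +oo, log 0 = -oo) *)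
Definition Dmax n (rho sigma : 'M[C]_n) : \bar R :=
  ereal_inf [set (log2 lam)%:E | lam in
               [set lam : R | (0 < lam)%R /\ loewner_le rho ((lam%:C)%C *: sigma)]].

Definition Dmax_ch n m (M M' : 'M[C]_n -> 'M[C]_m) : \bar R :=
  ereal_sup [set x | exists (k : nat) (rho : 'M[C]_(k * n)),
     is_state rho /\ x = Dmax (tensmap (@idmap k) M rho) (tensmap (@idmap k) M' rho)].

Definition Smin_ch a' b' a b (N : 'M[C]_(a' * b') -> 'M[C]_(a * b)) : \bar R :=
  - ereal_inf [set Dmax_ch N (tensmap (@replacer1 a' a) Q) |
                 Q in [set Q : 'M[C]_b' -> 'M[C]_b | is_channel Q]].

Definition Smin x y (rho : 'M[C]_(x * y)) : \bar R :=
  - ereal_inf [set Dmax rho (1%:M *t sigma) | sigma in [set s : 'M[C]_y | is_state s]].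

Definition Smin_down x y (rho : 'M[C]_(x * y)) : \bar R :=
  - Dmax rho (1%:M *t ptrace1 rho).

End QuantumDefs.

(* Main.v *)
Require Import Defs.
From HB Require Import structures.
From mathcomp Require Import all_boot all_order all_algebra.
From mathcomp Require Import complex mxtens.
From mathcomp Require Import boolp classical_sets reals ereal exp.
From mathcomp Require Import ring.

Set Implicit Arguments.
Unset Strict Implicit.
Unset Printing Implicit Defensive.
Import Order.TTheory GRing.Theory Num.Theory.
Local Open Scope ring_scope.

Section P1.
Variable R : realType.
Local Notation C := (R[i]).

Lemma conjcE (x : C) : conjc x = x^*. Proof. by []. Qed.

Lemma sum_tidx m n (F : 'I_(m*n) -> C) :
  \sum_(u < m * n) F u = \sum_(i < m) \sum_(j < n) F (tidx i j).
Proof.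
rewrite [RHS]pair_big /=.
rewrite (reindex (@mxtens_index m n)) /=; first by apply: eq_bigr => -[i j].
by exists (@mxtens_unindex m n) => x _; rewrite (mxtens_indexK, mxtens_unindexK).
Qed.

Lemma tidx_eq m n (i i' : 'I_m) (j j' : 'I_n) :
  (tidx i j == tidx i' j') = (i == i') && (j == j').
Proof.
apply/eqP/andP => [H|[/eqP -> /eqP ->] //].
have := congr1 (@mxtens_unindex m n) H; rewrite /tidx !mxtens_indexK.
by case=> -> ->.
Qed.

Lemma tidx_unindex m n (u : 'I_(m*n)) :
  u = tidx (@mxtens_unindex _ _ u).1 (@mxtens_unindex _ _ u).2.
Proof. by rewrite /tidx -surjective_pairing mxtens_unindexK. Qed.

Lemma tidxK1 m n (i : 'I_m) (j : 'I_n) : (@mxtens_unindex _ _ (tidx i j)).1 = i.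
Proof. by rewrite /tidx mxtens_indexK. Qed.
Lemma tidxK2 m n (i : 'I_m) (j : 'I_n) : (@mxtens_unindex _ _ (tidx i j)).2 = j.
Proof. by rewrite /tidx mxtens_indexK. Qed.

Lemma tensE m n p q (A : 'M[C]_(m, n)) (B : 'M[C]_(p, q)) i j k l :
  (A *t B) (tidx i j) (tidx k l) = A i k * B j l.
Proof. exact: tensmxE. Qed.

Lemma blockE m n (X : 'M[C]_(m * n)) i j k l : block X i j k l = X (tidx i k) (tidx j l).
Proof. by rewrite mxE. Qed.

Lemma sum_delta n (a : 'I_n) (g : 'I_n -> C) :
  \sum_(b < n) ((a == b)%:R * g b) = g a.
Proof.
rewrite (bigD1 a) //= eqxx mul1r big1 ?addr0 // => b /negPf.
by rewrite eq_sym => ->; rewrite mul0r.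
Qed.

Lemma sum_delta' n (a : 'I_n) (g : 'I_n -> C) :
  \sum_(b < n) (g b * (b == a)%:R) = g a.
Proof.
rewrite (bigD1 a) //= eqxx mulr1 big1 ?addr0 // => b /negPf ->.
by rewrite mulr0.
Qed.

Lemma tensmapE n1 m1 n2 m2 (M1 : 'M[C]_n1 -> 'M[C]_m1) (M2 : 'M[C]_n2 -> 'M[C]_m2)
   X i j p q :
  tensmap M1 M2 X (tidx i p) (tidx j q) =
  \sum_(i' < n1) \sum_(j' < n1) (M1 (delta_mx i' j') i j * M2 (block X i' j') p q).
Proof.
rewrite /tensmap summxE; apply: eq_bigr => i' _; rewrite summxE.
by apply: eq_bigr => j' _; rewrite tensE.
Qed.

Lemma qfE n (v : 'cV[C]_n) (A : 'M[C]_n) :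
  (adjmx v *m A *m v) 0 0 = \sum_a \sum_b ((v a 0)^* * A a b * v b 0).
Proof.
rewrite mxE exchange_big; apply: eq_bigr => b _.
rewrite mxE mulr_suml; apply: eq_bigr => a _.
by rewrite !mxE.
Qed.

Lemma adjmxM m n p (A : 'M[C]_(m, n)) (B : 'M[C]_(n, p)) :
  adjmx (A *m B) = adjmx B *m adjmx A.
Proof. by rewrite /adjmx map_mxM trmx_mul. Qed.

Lemma psd_sandwich m n (A : 'M[C]_m) (W : 'M[C]_(m, n)) :
  psd A -> psd (adjmx W *m A *m W).
Proof.
move=> HA v; have := HA (W *m v).
by rewrite adjmxM !mulmxA.
Qed.

Lemma psd_reindex m n (A : 'M[C]_m) (f : 'I_n -> 'I_m) :
  psd A -> psd (\matrix_(u, v) A (f u) (f v)).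
Proof.
move=> HA.
suff -> : \matrix_(u, v) A (f u) (f v) =
   adjmx (\matrix_(a, u) (f u == a)%:R : 'M[C]_(m, n)) *m A *m
     (\matrix_(a, u) (f u == a)%:R) by exact: psd_sandwich.
apply/matrixP => u v; rewrite !mxE.
rewrite -(sum_delta' (f v) (fun b => A (f u) b)).
apply: eq_bigr => b _; rewrite !mxE; congr (_ * _); last by rewrite eq_sym.
rewrite -(sum_delta (f u) (fun a => A a b)).
by apply: eq_bigr => a _; rewrite !mxE conjcE conjC_nat.
Qed.

Lemma psd_rank1 n (x : 'I_n -> C) : psd (\matrix_(a, b) ((x a)^* * x b)).
Proof.
move=> v; rewrite qfE.
set s := \sum_b (x b * v b 0).
have -> : \sum_a \sum_b ((v a 0)^* * (\matrix_(a0, b0) ((x a0)^* * x b0)) a b * v b 0)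
   = s * s^*.
  rewrite mulrC /s rmorph_sum mulr_suml; apply: eq_bigr => a _.
  rewrite mulr_sumr; apply: eq_bigr => b _; rewrite mxE rmorphM /=.
  by rewrite -!mulrA mulrCA.
exact: (@mul_conjC_ge0 C).
Qed.

Lemma psd_add n (A B : 'M[C]_n) : psd A -> psd B -> psd (A + B).
Proof.
move=> HA HB v; rewrite mulmxDr mulmxDl mxE; exact: addr_ge0.
Qed.

Lemma psd0 n : psd (0 : 'M[C]_n).
Proof. by move=> v; rewrite mulmx0 mul0mx mxE. Qed.

Lemma psd_sum n (I : finType) (P : pred I) (F : I -> 'M[C]_n) :
  (forall i, P i -> psd (F i)) -> psd (\sum_(i | P i) F i).
Proof.
move=> H; elim/big_ind: _ => //; [exact: psd0 | exact: psd_add].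
Qed.

Lemma psd_scale n (c : C) (A : 'M[C]_n) : 0 <= c -> psd A -> psd (c *: A).
Proof.
move=> hc HA v; rewrite -scalemxAr -scalemxAl mxE.
exact: (@mulr_ge0 C).
Qed.

End P1.

Section P2.
Local Open Scope sesquilinear_scope.
Variable R : realType.
Local Notation C := (R[i]).

Lemma dAd n (A : 'M[C]_n) a b :
  ((delta_mx 0 a : 'rV[C]_n) *m A *m (delta_mx b 0 : 'cV[C]_n)) 0 0 = A a b.
Proof. by rewrite -rowE -colE !mxE. Qed.

Lemma addmxE' m n (X Y : 'M[C]_(m, n)) i j : (X + Y) i j = X i j + Y i j.
Proof. by rewrite mxE. Qed.
Lemma scalemxE' m n (c : C) (X : 'M[C]_(m, n)) i j : (c *: X) i j = c * X i j.
Proof. by rewrite mxE. Qed.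

Lemma adjmxDZ n (u w : 'cV[C]_n) (x : C) : adjmx (u + x *: w) = adjmx u + x^* *: adjmx w.
Proof. by apply/matrixP => i j; rewrite !mxE rmorphD rmorphM. Qed.

Lemma adjmx_delta n (a : 'I_n) : adjmx (delta_mx a 0 : 'cV[C]_n) = delta_mx 0 a.
Proof. by apply/matrixP => i j; rewrite !mxE conjcE conjC_nat andbC. Qed.

Lemma qf_pair n (A : 'M[C]_n) a b (x : C) :
  let v := (delta_mx a 0 + x *: delta_mx b 0 : 'cV[C]_n) in
  (adjmx v *m A *m v) 0 0 = A a a + x * A a b + x^* * A b a + x^* * x * A b b.
Proof.
move=> v; rewrite /v adjmxDZ !adjmx_delta.
rewrite !mulmxDl !mulmxDr -!scalemxAl -!scalemxAr.
rewrite !addmxE' !scalemxE' !dAd; ring.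
Qed.

Lemma psd_herm n (A : 'M[C]_n) : psd A -> forall a b, A b a = (A a b)^*.
Proof.
move=> HA a b.
have re x : (A a a + x * A a b + x^* * A b a + x^* * x * A b b)^* -
             (A a a + x * A a b + x^* * A b a + x^* * x * A b b) = 0.
  apply/eqP; rewrite subr_eq0; apply/eqP.
  by apply/CrealP/ger0_real; rewrite -qf_pair; exact: HA.
have rd c : (A c c)^* = A c c.
  apply/CrealP/ger0_real; have := HA (delta_mx c 0 + 0 *: delta_mx c 0).
  by rewrite qf_pair conjC0 !mul0r !addr0.
have E1 := re 1; have E2 := re 'i.
rewrite !rmorphD !rmorphM /= !conjCK (rd a) (rd b) in E1 E2.
rewrite !conjC1 in E1; rewrite !conjCi in E2.
set X1 := (X in X = 0) in E1; set X2 := (X in X = 0) in E2.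
have H : 2 * 'i * (A b a - (A a b)^*) = X2 - 'i * X1 by rewrite /X1 /X2; ring.
move: H; rewrite E1 E2 mulr0 subr0 => /eqP; rewrite !mulf_eq0 pnatr_eq0 /=.
by rewrite (negbTE (@neq0Ci C)) /= subr_eq0 => /eqP.
Qed.

Lemma adjmx_tc m n (X : 'M[C]_(m, n)) : adjmx X = X^t*.
Proof. by apply/matrixP => i j; rewrite !mxE. Qed.

Lemma psd_gram n (A : 'M[C]_n) : psd A ->
  exists B : 'M[C]_n, forall a b, A a b = \sum_t (B t a)^* * B t b.
Proof.
move=> HA.
have Aherm : A^t* = A.
  by apply/matrixP => a b; rewrite !mxE (psd_herm HA b a).
have Anorm : A \is normalmx by apply/normalmxP; rewrite Aherm.
have /orthomx_spectralP HP := Anorm.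
set P := spectralmx A in HP; set d := spectral_diag A in HP.
have Pu : P \is unitarymx by exact: spectral_unitarymx.
rewrite invmx_unitary // in HP.
have PP : P *m P^t* = 1%:M by apply/unitarymxP.
have dge0 i : 0 <= d 0 i.
  have := HA (P^t* *m delta_mx i 0).
  rewrite adjmx_tc trmx_mul map_mxM trmxCK HP !mulmxA.
  rewrite -[_ *m P *m P^t*]mulmxA PP mulmx1.
  rewrite -[_ *m P *m P^t*]mulmxA PP mulmx1.
  have -> : (delta_mx i 0 : 'cV[C]_n)^t* = delta_mx 0 i.
    by apply/matrixP => x y; rewrite !mxE conjC_nat andbC.
  by rewrite dAd mxE eqxx mulr1n.
pose s : 'rV[C]_n := \row_i sqrtC (d 0 i).
exists (diag_mx s *m P) => a b.
have -> : \sum_t ((diag_mx s *m P) t a)^* * (diag_mx s *m P) t b =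
   ((diag_mx s *m P)^t* *m (diag_mx s *m P)) a b.
  by rewrite mxE; apply: eq_bigr => t _; rewrite !mxE.
rewrite trmx_mul map_mxM tr_diag_mx map_diag_mx.
have -> : map_mx (@Num.conj C) s = s.
  apply/matrixP => x y; rewrite !mxE; apply: conj_Creal; apply: sqrtC_real.
  by [].
rewrite mulmxA -[_ *m diag_mx s *m diag_mx s]mulmxA mulmx_diag.
have -> : \row_j (s 0 j * s 0 j) = d.
  apply/matrixP => x y; rewrite !mxE ord1 -expr2 sqrtCK //.
by rewrite -HP.
Qed.

End P2.

Section P3.
Variable R : realType.
Local Notation C := (R[i]).

Definition Jm n m (M : 'M[C]_n -> 'M[C]_m) : 'M[C]_(n * m) :=
  \matrix_(u, v) M (delta_mx (@mxtens_unindex _ _ u).1 (@mxtens_unindex _ _ v).1)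
                   (@mxtens_unindex _ _ u).2 (@mxtens_unindex _ _ v).2.

Lemma JmE n m (M : 'M[C]_n -> 'M[C]_m) r p r' q :
  Jm M (tidx r p) (tidx r' q) = M (delta_mx r r') p q.
Proof. by rewrite mxE !tidxK1 !tidxK2. Qed.

Section Lin.
Variables (n m : nat) (M : 'M[C]_n -> 'M[C]_m).
Hypothesis HM : is_linear_map M.

Lemma lin0 : M 0 = 0.
Proof.
have H := HM 1 0 0; rewrite !scale1r addr0 in H.
by apply: (addrI (M 0)); rewrite addr0 -H.
Qed.

Lemma linD X Y : M (X + Y) = M X + M Y.
Proof. by have := HM 1 X Y; rewrite !scale1r. Qed.

Lemma linZ a X : M (a *: X) = a *: M X.
Proof. by have := HM a X 0; rewrite !addr0 lin0 addr0. Qed.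

Lemma linN X : M (- X) = - M X.
Proof. by rewrite -scaleN1r linZ scaleN1r. Qed.

Lemma linB X Y : M (X - Y) = M X - M Y.
Proof. by rewrite linD linN. Qed.

Lemma lin_sum (I : finType) (F : I -> 'M[C]_n) :
  M (\sum_i F i) = \sum_i M (F i).
Proof.
apply: (big_morph M) => //; [exact: linD | exact: lin0].
Qed.

Lemma lin_expand X : M X = \sum_r \sum_r' X r r' *: M (delta_mx r r').
Proof.
rewrite {1}[X]matrix_sum_delta lin_sum; apply: eq_bigr => r _.
by rewrite lin_sum; apply: eq_bigr => r' _; rewrite linZ.
Qed.

End Lin.

Lemma kraus n m (M : 'M[C]_n -> 'M[C]_m) (B : 'M[C]_(n * m)) :
  is_linear_map M ->
  (forall a b, Jm M a b = \sum_t (B t a)^* * B t b) ->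
  forall Y, M Y = \sum_t (adjmx (\matrix_(r, p) B t (tidx r p) : 'M[C]_(n, m))
                          *m Y *m (\matrix_(r, p) B t (tidx r p))).
Proof.
move=> HM HB Y; rewrite (lin_expand HM); apply/matrixP => p q.
transitivity (\sum_(t < n * m) \sum_(r < n) \sum_(r' < n)
    ((B t (tidx r p))^* * Y r r' * B t (tidx r' q))).
  rewrite summxE.
  transitivity (\sum_(r < n) \sum_(t < n * m) \sum_(r' < n)
    ((B t (tidx r p))^* * Y r r' * B t (tidx r' q))); last by rewrite exchange_big.
  apply: eq_bigr => r _; rewrite summxE.
  transitivity (\sum_(r' < n) \sum_(t < n * m)
    ((B t (tidx r p))^* * Y r r' * B t (tidx r' q))); last by rewrite exchange_big.
  apply: eq_bigr => r' _; rewrite mxE -[M _ p q](JmE M) HB mulr_sumr.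
  by apply: eq_bigr => t _; ring.
rewrite summxE; apply: eq_bigr => t _.
rewrite mxE exchange_big; apply: eq_bigr => r _.
rewrite [in RHS]mxE [in RHS]mxE mulr_suml; apply: eq_bigr => r' _.
by rewrite !mxE.
Qed.

Lemma idmxE k (a b : 'I_k) : (1%:M : 'M[C]_k) a b = (a == b)%:R.
Proof. by rewrite mxE. Qed.

Lemma adjmxE m n (A : 'M[C]_(m, n)) i j : adjmx A i j = (A j i)^*.
Proof. by rewrite !mxE. Qed.

Lemma sand_tens k n m (L : 'M[C]_(n, m)) (X : 'M[C]_(k * n)) i j p q :
  (adjmx (1%:M *t L : 'M[C]_(k * n, k * m)) *m X *m (1%:M *t L)) (tidx i p) (tidx j q)
  = (adjmx L *m block X i j *m L) p q.
Proof.
rewrite mxE sum_tidx (bigD1 j) //= [X in _ + X]big1 ?addr0 => [|j' /negPf nj]; last first.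
  by apply: big1 => r' _; rewrite tensE idmxE nj mul0r mulr0.
rewrite [in RHS]mxE; apply: eq_bigr => r' _; rewrite tensE idmxE eqxx mul1r.
congr (_ * _); rewrite [in LHS]mxE [in RHS]mxE sum_tidx (bigD1 i) //=.
rewrite [X in _ + X]big1 ?addr0 => [|i' /negPf ni]; last first.
  by apply: big1 => r _; rewrite adjmxE tensE idmxE ni mul0r conjC0 mul0r.
apply: eq_bigr => r _; rewrite !adjmxE tensE idmxE eqxx mul1r.
by rewrite blockE.
Qed.

Lemma tensmap_idE k n m (M : 'M[C]_n -> 'M[C]_m) X i j p q :
  tensmap (@idmap R k) M X (tidx i p) (tidx j q) = M (block X i j) p q.
Proof.
rewrite tensmapE /idmap.
rewrite (bigD1 i) //= [X in _ + X]big1 => [|i' /negPf ni]; last first.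
  by rewrite big1 // => j' _; rewrite mxE eq_sym ni mul0r.
rewrite addr0 (bigD1 j) //= [X in _ + X]big1 => [|j' /negPf nj]; last first.
  by rewrite mxE eq_sym nj andbF mul0r.
by rewrite addr0 mxE !eqxx mul1r.
Qed.

Lemma cp_of_Jm n m (M : 'M[C]_n -> 'M[C]_m) : is_linear_map M -> psd (Jm M) ->
  forall k X, psd X -> psd (tensmap (@idmap R k) M X).
Proof.
move=> HM /psd_gram [B HB] k X HX.
have -> : tensmap (@idmap R k) M X =
   \sum_t (adjmx (1%:M *t (\matrix_(r, p) B t (tidx r p) : 'M[C]_(n, m)) : 'M[C]_(k * n, k * m))
            *m X *m (1%:M *t (\matrix_(r, p) B t (tidx r p) : 'M[C]_(n, m)))).
  apply/matrixP => u v; rewrite (tidx_unindex u) (tidx_unindex v).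
  rewrite tensmap_idE (kraus HM HB) !summxE; apply: eq_bigr => t _.
  by rewrite sand_tens.
by apply: psd_sum => t _; apply: psd_sandwich.
Qed.

End P3.

Section P4.
Variable R : realType.
Local Notation C := (R[i]).


Lemma swapmid_idxE p q r s (i : 'I_p) (j : 'I_q) (k : 'I_r) (l : 'I_s) :
  swapmid_idx (tidx (tidx i k) (tidx j l)) = tidx (tidx i j) (tidx k l).
Proof. by rewrite /swapmid_idx /tidx !mxtens_indexK. Qed.

Lemma swapmidE p q r s (X : 'M[C]_((p * q) * (r * s))) i j k l i' j' k' l' :
  swapmid X (tidx (tidx i k) (tidx j l)) (tidx (tidx i' k') (tidx j' l'))
  = X (tidx (tidx i j) (tidx k l)) (tidx (tidx i' j') (tidx k' l')).
Proof. by rewrite mxE !swapmid_idxE. Qed.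

Definition Omega n : 'M[C]_(n * n) :=
  \matrix_(u, v) (((@mxtens_unindex _ _ u).1 == (@mxtens_unindex _ _ u).2)%:R *
                  ((@mxtens_unindex _ _ v).1 == (@mxtens_unindex _ _ v).2)%:R).

Lemma OmegaE n (i k j l : 'I_n) :
  Omega n (tidx i k) (tidx j l) = (i == k)%:R * (j == l)%:R.
Proof. by rewrite mxE !tidxK1 !tidxK2. Qed.

Lemma psd_Omega n : psd (Omega n).
Proof.
have -> : Omega n = \matrix_(a, b)
   ((((@mxtens_unindex _ _ a).1 == (@mxtens_unindex _ _ a).2)%:R : C)^* *
     ((@mxtens_unindex _ _ b).1 == (@mxtens_unindex _ _ b).2)%:R).
  by apply/matrixP => u v; rewrite !mxE conjC_nat.
exact: psd_rank1.
Qed.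

Lemma block_Omega n (i j : 'I_n) : block (Omega n) i j = delta_mx i j.
Proof.
apply/matrixP => k l; rewrite blockE OmegaE mxE.
by rewrite -natrM mulnb [k == i]eq_sym [l == j]eq_sym.
Qed.

Lemma tr_Omega n : \tr (Omega n) = n%:R.
Proof.
rewrite /mxtrace sum_tidx.
transitivity (\sum_(i < n) (1 : C)); last by rewrite sumr_const card_ord.
apply: eq_bigr => i _; rewrite (bigD1 i) //= OmegaE eqxx mulr1 big1 ?addr0 //.
by move=> j /negPf nij; rewrite OmegaE eq_sym nij mul0r.
Qed.

Lemma Jm_tens n m (M : 'M[C]_n -> 'M[C]_m) :
  Jm M = tensmap (@idmap R n) M (Omega n).
Proof.
apply/matrixP => u v; rewrite (tidx_unindex u) (tidx_unindex v).
by rewrite JmE tensmap_idE block_Omega.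
Qed.

Lemma psd_Jm_cp n m (M : 'M[C]_n -> 'M[C]_m) : completely_positive M -> psd (Jm M).
Proof. by move=> HM; rewrite Jm_tens; apply: HM; exact: psd_Omega. Qed.

Lemma maxentE d : maxent R d = (d%:R)^-1 *: Omega d.
Proof.
apply/matrixP => u v; rewrite (tidx_unindex u) (tidx_unindex v).
set i := (_ u).1; set k := (_ u).2; set j := (_ v).1; set l := (_ v).2.
rewrite /maxent scalemxE' [in RHS]scalemxE' OmegaE; congr (_ * _).
rewrite summxE.
transitivity (\sum_(i0 < d) ((i == i0)%:R * (k == i0)%:R * \sum_(j0 < d) ((j == j0)%:R * (l == j0)%:R) : C)).
  apply: eq_bigr => i0 _; rewrite summxE mulr_sumr; apply: eq_bigr => j0 _.
  by rewrite mxE !tidx_eq -!natrM !mulnb; congr (_%:R); rewrite -!andbA; do 2 f_equal; rewrite andbC.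
rewrite -mulr_suml.
have E (x y : 'I_d) : \sum_(i0 < d) ((x == i0)%:R * (y == i0)%:R : C) = (x == y)%:R.
  by rewrite (sum_delta x (fun i0 => (y == i0)%:R)) eq_sym.
by rewrite E E.
Qed.

Lemma tidx_ind m n (P : 'I_(m * n) -> Prop) :
  (forall i j, P (tidx i j)) -> forall u, P u.
Proof. by move=> H u; rewrite (tidx_unindex u). Qed.

Lemma W_Omega a b :
  swapmid (maxent R a *t maxent R b) = ((a * b)%:R)^-1 *: Omega (a * b).
Proof.
apply/matrixP => u v.
elim/tidx_ind: u => u1 u2; elim/tidx_ind: u1 => ra rb; elim/tidx_ind: u2 => x y.
elim/tidx_ind: v => v1 v2; elim/tidx_ind: v1 => ra' rb'; elim/tidx_ind: v2 => x' y'.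
rewrite swapmidE tensE !maxentE !scalemxE' !OmegaE !tidx_eq.
rewrite natrM invfM -!natrM -!mulnb; ring.
Qed.

Lemma blockZ m n (c : C) (X : 'M[C]_(m * n)) i j : block (c *: X) i j = c *: block X i j.
Proof. by apply/matrixP => k l; rewrite !mxE. Qed.

Lemma blockD m n (X Y : 'M[C]_(m * n)) i j : block (X + Y) i j = block X i j + block Y i j.
Proof. by apply/matrixP => k l; rewrite !mxE. Qed.

Lemma tensmap_Omega n m (M : 'M[C]_n -> 'M[C]_m) (c : C) : is_linear_map M ->
  tensmap (@idmap R n) M (c *: Omega n) = c *: Jm M.
Proof.
move=> HM; apply/matrixP => u v.
elim/tidx_ind: u => i p; elim/tidx_ind: v => j q.
by rewrite tensmap_idE scalemxE' JmE blockZ block_Omega (linZ HM) scalemxE'.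
Qed.

Lemma choiE a' b' a b (N : 'M[C]_(a' * b') -> 'M[C]_(a * b)) : is_linear_map N ->
  forall ra x rb y ra' x' rb' y',
  choi N (tidx (tidx ra x) (tidx rb y)) (tidx (tidx ra' x') (tidx rb' y')) =
  ((a' * b')%:R)^-1 * Jm N (tidx (tidx ra rb) (tidx x y)) (tidx (tidx ra' rb') (tidx x' y')).
Proof.
move=> HN ra x rb y ra' x' rb' y'.
by rewrite /choi swapmidE W_Omega tensmap_Omega // scalemxE'.
Qed.

End P4.

Section P5.
Variable R : realType.
Local Notation C := (R[i]).

Lemma tensmap_lin n1 m1 n2 m2 (M1 : 'M[C]_n1 -> 'M[C]_m1) (M2 : 'M[C]_n2 -> 'M[C]_m2) :
  is_linear_map M2 -> is_linear_map (tensmap M1 M2).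
Proof.
move=> HM c X Y; apply/matrixP => u v.
elim/tidx_ind: u => i p; elim/tidx_ind: v => j q.
rewrite addmxE' scalemxE' !tensmapE mulr_sumr -big_split; apply: eq_bigr => i' _.
rewrite mulr_sumr -big_split; apply: eq_bigr => j' _.
by rewrite blockD blockZ HM addmxE' scalemxE' mulrDr mulrCA.
Qed.

Lemma ptrace1E m n (X : 'M[C]_(m * n)) p q : ptrace1 X p q = \sum_i X (tidx i p) (tidx i q).
Proof. by rewrite summxE; apply: eq_bigr => i _; rewrite blockE. Qed.

Lemma tr_ptrace1 m n (X : 'M[C]_(m * n)) : \tr (ptrace1 X) = \tr X.
Proof.
rewrite /mxtrace [RHS]sum_tidx exchange_big; apply: eq_bigr => p _.
by rewrite ptrace1E.
Qed.

Lemma tr_tens m n (A : 'M[C]_m) (B : 'M[C]_n) : \tr (A *t B) = \tr A * \tr B.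
Proof.
rewrite /mxtrace sum_tidx mulr_suml; apply: eq_bigr => i _.
by rewrite mulr_sumr; apply: eq_bigr => j _; rewrite tensE.
Qed.

Lemma tr_delta n (i j : 'I_n) : \tr (delta_mx i j : 'M[C]_n) = (i == j)%:R.
Proof.
rewrite /mxtrace (bigD1 i) //= big1 ?addr0 => [|k /negPf nk]; last by rewrite mxE nk.
by rewrite mxE eqxx /= eq_sym.
Qed.

Lemma tens1_delta k n (r r' : 'I_n) :
  (1%:M : 'M[C]_k) *t (delta_mx r r' : 'M[C]_n) = \sum_(al < k) delta_mx (tidx al r) (tidx al r').
Proof.
apply/matrixP => u v; elim/tidx_ind: u => i p; elim/tidx_ind: v => j q.
rewrite tensE summxE.
under eq_bigr do rewrite mxE !tidx_eq.
rewrite [in LHS]mxE [in LHS]mxE -natrM mulnb.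
transitivity (\sum_(al < k) ((i == al)%:R * ((j == al) && (p == r) && (q == r'))%:R : C)).
  rewrite (sum_delta i (fun al => ((j == al) && (p == r) && (q == r'))%:R)).
  by rewrite eq_sym andbA.
apply: eq_bigr => al _; rewrite -natrM mulnb; congr (_%:R).
by case: (i == al); case: (j == al); case: (p == r); case: (q == r').
Qed.

Lemma tens1_lin k n (c : C) (X Y : 'M[C]_n) :
  (1%:M : 'M[C]_k) *t (c *: X + Y) = c *: ((1%:M : 'M[C]_k) *t X) + (1%:M *t Y).
Proof.
apply/matrixP => u v; elim/tidx_ind: u => i p; elim/tidx_ind: v => j q.
by rewrite addmxE' scalemxE' !tensE addmxE' scalemxE'; ring.
Qed.

Lemma ptrace1_lin m n (c : C) (X Y : 'M[C]_(m * n)) :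
  ptrace1 (c *: X + Y) = c *: ptrace1 X + ptrace1 Y.
Proof.
apply/matrixP => p q; rewrite addmxE' scalemxE' !ptrace1E mulr_sumr -big_split.
by apply: eq_bigr => i _; rewrite addmxE' scalemxE'.
Qed.

Definition Q0 a' b' a b (N : 'M[C]_(a' * b') -> 'M[C]_(a * b)) : 'M[C]_b' -> 'M[C]_b :=
  fun X => ptrace1 (N (((a'%:R)^-1 : C) *: ((1%:M : 'M[C]_a') *t X))).

Lemma block_delta m n (i j : 'I_m) (k l : 'I_n) (i' j' : 'I_m) :
  block (delta_mx (tidx i k) (tidx j l) : 'M[C]_(m * n)) i' j' =
  ((i' == i) && (j' == j))%:R *: delta_mx k l.
Proof.
apply/matrixP => p q; rewrite blockE scalemxE' !mxE !tidx_eq -natrM mulnb.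
by case: (i' == i); case: (j' == j); case: (p == k); case: (q == l).
Qed.

Lemma Jm_RQ a' b' a b (Q : 'M[C]_b' -> 'M[C]_b) : is_linear_map Q ->
  forall (ra ra' : 'I_a') (rb rb' : 'I_b') (x x' : 'I_a) (y y' : 'I_b),
  Jm (tensmap (@replacer1 R a' a) Q) (tidx (tidx ra rb) (tidx x y))
     (tidx (tidx ra' rb') (tidx x' y')) =
  ((ra == ra') && (x == x'))%:R * Jm Q (tidx rb y) (tidx rb' y').
Proof.
move=> HQ ra ra' rb rb' x x' y y'.
rewrite JmE tensmapE.
transitivity (\sum_(i' < a') ((ra == i')%:R * \sum_(j' < a') ((ra' == j')%:R *
    ((i' == j')%:R * (x == x')%:R * Jm Q (tidx rb y) (tidx rb' y'))))).
  apply: eq_bigr => i' _; rewrite mulr_sumr; apply: eq_bigr => j' _.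
  rewrite block_delta (linZ HQ) scalemxE' JmE /replacer1 tr_delta mxE.
  rewrite -mulr_natr -mulnb natrM [ra == i']eq_sym [ra' == j']eq_sym; ring.
under eq_bigr do rewrite (sum_delta ra' (fun j' => (_ == j')%:R * (x == x')%:R * _)).
rewrite (sum_delta ra (fun i' => (i' == ra')%:R * (x == x')%:R * _)).
by rewrite -natrM mulnb.
Qed.

Section Q0s.
Variables (a' b' a b : nat) (N : 'M[C]_(a' * b') -> 'M[C]_(a * b)).
Hypothesis HN : is_channel N.
Hypothesis ha' : (0 < a')%N.

Let HNl : is_linear_map N. Proof. by case: HN. Qed.

Lemma Q0_lin : is_linear_map (Q0 N).
Proof.
move=> c X Y; rewrite /Q0 tens1_lin scalerDr scalerA mulrC -scalerA HNl.
by rewrite ptrace1_lin.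
Qed.

Lemma Q0_tp : trace_preserving (Q0 N).
Proof.
case: HN => _ _ tp X; rewrite /Q0 tr_ptrace1 tp mxtraceZ tr_tens mxtrace1 mulrA.
by rewrite mulVf ?mul1r // pnatr_eq0 -lt0n.
Qed.

Lemma Jm_Q0E rb y rb' y' :
  Jm (Q0 N) (tidx rb y) (tidx rb' y') = (a'%:R)^-1 *
    \sum_(z < a) \sum_(al < a') Jm N (tidx (tidx al rb) (tidx z y)) (tidx (tidx al rb') (tidx z y')).
Proof.
rewrite JmE /Q0 ptrace1E tens1_delta (linZ HNl) mulr_sumr.
apply: eq_bigr => z _; rewrite scalemxE'; congr (_ * _).
rewrite (lin_sum HNl) summxE; apply: eq_bigr => al _.
by rewrite JmE.
Qed.

Lemma psd_Jm_Q0 : psd (Jm (Q0 N)).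
Proof.
pose f (z : 'I_a) (al : 'I_a') (u : 'I_(b' * b)) : 'I_((a' * b') * (a * b)) :=
  tidx (tidx al (@mxtens_unindex _ _ u).1) (tidx z (@mxtens_unindex _ _ u).2).
have -> : Jm (Q0 N) = \sum_(z < a) \sum_(al < a')
   ((a'%:R)^-1 *: \matrix_(u, v) Jm N (f z al u) (f z al v)).
  apply/matrixP => u v; elim/tidx_ind: u => rb y; elim/tidx_ind: v => rb' y'.
  rewrite Jm_Q0E summxE mulr_sumr; apply: eq_bigr => z _.
  rewrite summxE mulr_sumr; apply: eq_bigr => al _.
  by rewrite scalemxE' mxE /f !tidxK1 !tidxK2.
apply: psd_sum => z _; apply: psd_sum => al _; apply: psd_scale.
  by rewrite invr_ge0 ler0n.
apply: psd_reindex; apply: psd_Jm_cp; by case: HN.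
Qed.

Lemma Q0_channel : is_channel (Q0 N).
Proof.
split; [exact: Q0_lin | | exact: Q0_tp].
move=> k X HX; apply: cp_of_Jm => //; [exact: Q0_lin | exact: psd_Jm_Q0].
Qed.

End Q0s.

End P5.

Section P6.
Variable R : realType.
Local Notation C := (R[i]).

Lemma subE m n (X Y : 'M[C]_(m, n)) i j : (X - Y) i j = X i j - Y i j.
Proof. by rewrite !mxE. Qed.

Lemma oppE m n (X : 'M[C]_(m, n)) i j : (- X) i j = - X i j.
Proof. by rewrite !mxE. Qed.

Variables (a' b' a b : nat) (N : 'M[C]_(a' * b') -> 'M[C]_(a * b)).
Hypothesis HN : is_channel N.
Hypothesis ha' : (0 < a')%N.
Hypothesis hb' : (0 < b')%N.

Let HNl : is_linear_map N. Proof. by case: HN. Qed.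

Lemma ptrace_choi rb y rb' y' :
  ptrace1 (choi N) (tidx rb y) (tidx rb' y') = (b'%:R)^-1 * Jm (Q0 N) (tidx rb y) (tidx rb' y').
Proof.
rewrite ptrace1E sum_tidx (Jm_Q0E HN) mulrA -invfM -natrM [(b' * a')%N]mulnC mulr_sumr exchange_big.
apply: eq_bigr => al _; rewrite mulr_sumr; apply: eq_bigr => z _.
by rewrite (choiE HNl).
Qed.

Lemma JmB n m (L : C) (T S : 'M[C]_n -> 'M[C]_m) u v :
  Jm (fun X => L *: T X - S X) u v = L * Jm T u v - Jm S u v.
Proof.
by elim/tidx_ind: u => r p; elim/tidx_ind: v => r' q; rewrite !JmE subE scalemxE'.
Qed.

Lemma natC_inv_mul : ((a' * b')%:R : C) * (b'%:R)^-1 * (a'%:R)^-1 = 1.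
Proof.
have ha0 : (a'%:R : C) != 0 by rewrite pnatr_eq0 -lt0n.
have hb0 : (b'%:R : C) != 0 by rewrite pnatr_eq0 -lt0n.
by rewrite natrM mulfK // divff.
Qed.

Lemma lower_mat (lam : R) :
  loewner_le (choi N) ((lam%:C)%C *: ((1%:M : 'M[C]_(a' * a)) *t ptrace1 (choi N))) ->
  forall k (rho : 'M[C]_(k * (a' * b'))), psd rho ->
  loewner_le (tensmap (@idmap R k) N rho)
    (((lam * a'%:R)%:C)%C *: tensmap (@idmap R k) (tensmap (@replacer1 R a' a) (Q0 N)) rho).
Proof.
move=> HZ k rho Hrho.
set L : C := ((lam * a'%:R)%:C)%C.
pose T := tensmap (@replacer1 R a' a) (Q0 N).
have HT : is_linear_map T by apply: tensmap_lin; exact: Q0_lin.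
pose M := fun X => L *: T X - N X.
have HMl : is_linear_map M.
  move=> c X Y; rewrite /M HT HNl; apply/matrixP => i j.
  by rewrite !(addmxE', scalemxE', subE, oppE); ring.
have HJ : psd (Jm M).
  have -> : Jm M = ((a' * b')%:R : C) *: \matrix_(u, v)
      ((lam%:C)%C *: ((1%:M : 'M[C]_(a' * a)) *t ptrace1 (choi N)) - choi N)
        (@swapmid_idx a' a b' b u) (@swapmid_idx a' a b' b v).
    apply/matrixP => u v.
    elim/tidx_ind: u => u1 u2; elim/tidx_ind: u1 => ra rb; elim/tidx_ind: u2 => x y.
    elim/tidx_ind: v => v1 v2; elim/tidx_ind: v1 => ra' rb'; elim/tidx_ind: v2 => x' y'.
    rewrite /M JmB [in RHS]scalemxE' [in RHS]mxE !swapmid_idxE subE scalemxE' tensE.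
    rewrite (_ : (1%:M : 'M[C]_(a' * a)) (tidx ra x) (tidx ra' x') = ((ra == ra') && (x == x'))%:R); last by rewrite mxE tidx_eq.
    rewrite ptrace_choi (choiE HNl) (@Jm_RQ R a' b' a b _ (Q0_lin HN)) /L.
    rewrite [in LHS]rmorphM /= rmorph_nat.
    have ha0 : (a'%:R : C) != 0 by rewrite pnatr_eq0 -lt0n.
    have hb0 : (b'%:R : C) != 0 by rewrite pnatr_eq0 -lt0n.
    by rewrite natrM; field; rewrite hb0 ha0.
  apply: (@psd_scale R); first exact: ler0n.
  exact: psd_reindex.
have := cp_of_Jm HMl HJ Hrho.
congr psd; apply/matrixP => u v; elim/tidx_ind: u => i p; elim/tidx_ind: v => j q.
by rewrite subE scalemxE' !tensmap_idE /M subE scalemxE'.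
Qed.

Lemma rho0_state : is_state (swapmid (maxent R a' *t maxent R b')).
Proof.
rewrite W_Omega; split.
  by apply: psd_scale; [rewrite invr_ge0 ler0n | exact: psd_Omega].
by rewrite mxtraceZ tr_Omega mulVf // pnatr_eq0 muln_eq0 negb_or -!lt0n ha' hb'.
Qed.

Lemma sigma_state (Q : 'M[C]_b' -> 'M[C]_b) : is_channel Q ->
  is_state ((b'%:R)^-1 *: Jm Q).
Proof.
case=> HQl HQc HQt; split.
  by apply: psd_scale; [rewrite invr_ge0 ler0n | exact: psd_Jm_cp].
rewrite mxtraceZ.
have -> : \tr (Jm Q) = b'%:R.
  rewrite /mxtrace sum_tidx.
  transitivity (\sum_(r < b') (1 : C)); last by rewrite sumr_const card_ord.
  apply: eq_bigr => r _; under eq_bigr do rewrite JmE.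
  by have := HQt (delta_mx r r); rewrite tr_delta eqxx /mxtrace.
by rewrite mulVf // pnatr_eq0 -lt0n.
Qed.

Lemma upper_mat (Q : 'M[C]_b' -> 'M[C]_b) : is_channel Q -> forall lam : R,
  loewner_le (tensmap (@idmap R (a' * b')) N (swapmid (maxent R a' *t maxent R b')))
     ((lam%:C)%C *: tensmap (@idmap R (a' * b')) (tensmap (@replacer1 R a' a) Q)
                   (swapmid (maxent R a' *t maxent R b'))) ->
  loewner_le (choi N) (((lam / a'%:R)%:C)%C *:
      ((1%:M : 'M[C]_(a' * a)) *t ((b'%:R)^-1 *: Jm Q))).
Proof.
case=> HQl _ _ lam.
rewrite /loewner_le W_Omega (tensmap_Omega _ HNl) (tensmap_Omega _ (tensmap_lin _ HQl)).
move=> /(psd_reindex (@swapmid_idx a' b' a b)); congr psd.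
apply/matrixP => u v.
elim/tidx_ind: u => u1 u2; elim/tidx_ind: u1 => ra x; elim/tidx_ind: u2 => rb y.
elim/tidx_ind: v => v1 v2; elim/tidx_ind: v1 => ra' x'; elim/tidx_ind: v2 => rb' y'.
rewrite [in LHS]mxE !swapmid_idxE !subE !scalemxE' tensE scalemxE' (choiE HNl).
rewrite (@Jm_RQ R a' b' a b _ HQl).
rewrite (_ : (1%:M : 'M[C]_(a' * a)) (tidx ra x) (tidx ra' x') = ((ra == ra') && (x == x'))%:R); last by rewrite mxE tidx_eq.
rewrite [in RHS]rmorphM /= fmorphV /= rmorph_nat.
have ha0 : (a'%:R : C) != 0 by rewrite pnatr_eq0 -lt0n.
have hb0 : (b'%:R : C) != 0 by rewrite pnatr_eq0 -lt0n.
by rewrite natrM; field; rewrite hb0 ha0.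
Qed.

End P6.

Unset Implicit Arguments.
Set Strict Implicit.

Lemma log2M (R : realType) (x y : R) : 0 < x -> 0 < y -> log2 (x * y) = log2 x + log2 y.
Proof. by move=> hx hy; rewrite /log2 lnM ?posrE // mulrDl. Qed.

Theorem proposition5 (R : realType) (a' b' a b : nat) (ha' : (0 < a')%N) (hb' : (0 < b')%N)
    (N : 'M[R[i]]_(a' * b') -> 'M[R[i]]_(a * b)) (hN : is_channel N) :
  ((Smin_down (choi N) - (log2 (a'%:R : R))%:E <= Smin_ch N)%E /\
   (Smin_ch N <= Smin (choi N) - (log2 (a'%:R : R))%:E)%E).
Proof.
have a'pos : (0 < (a'%:R : R)) by rewrite ltr0n.
have HNl : is_linear_map N by case: hN.
split.
- rewrite /Smin_down /Smin_ch.
  set Dd := Dmax _ _.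
  set I := ereal_inf _.
  have HI : (I <= Dd + (log2 (a'%:R : R))%:E)%E.
    apply: (@le_trans _ _ (Dmax_ch N (tensmap (@replacer1 R a' a) (Q0 N)))).
      apply: ereal_inf_lbound; exists (Q0 N) => //; exact: Q0_channel.
    apply: ge_ereal_sup => x [k [rho [Hrho ->]]].
    rewrite -leeBlDr //.
    apply: le_ereal_inf_tmp => _ [lam [lam0 Hlam] <-].
    rewrite leeBlDr // -EFinD -log2M //.
    apply: ereal_inf_lbound; exists (lam * a'%:R) => //; split.
      exact: mulr_gt0.
    by apply: lower_mat => //; case: Hrho.
  by rewrite -oppeD ?fin_num_adde_defl // leeN2.
- rewrite /Smin_ch /Smin.
  set I := ereal_inf _; set Is := ereal_inf _.
  rewrite -oppeD ?fin_num_adde_defl // leeN2.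
  apply: le_ereal_inf_tmp => _ [Q HQ <-].
  apply: (@le_trans _ _ (Dmax (tensmap (@idmap R (a' * b')) N (swapmid (maxent R a' *t maxent R b')))
      (tensmap (@idmap R (a' * b')) (tensmap (@replacer1 R a' a) Q) (swapmid (maxent R a' *t maxent R b'))))); last first.
    apply: ereal_sup_ubound; exists (a' * b')%N, (swapmid (maxent R a' *t maxent R b')); split => //.
    exact: rho0_state.
  apply: le_ereal_inf_tmp => _ [lam [lam0 Hlam] <-].
  rewrite -leeBrDr //.
  apply: (@le_trans _ _ (Dmax (choi N) (1%:M *t ((b'%:R)^-1 *: Jm Q)))).
    by apply: ereal_inf_lbound; exists ((b'%:R)^-1 *: Jm Q) => //; exact: sigma_state.
  apply: ereal_inf_lbound; exists (lam / a'%:R).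
    by split; [exact: divr_gt0 | exact: upper_mat].
  rewrite -EFinB; congr (_%:E).
  have E : log2 lam = log2 (lam / a'%:R) + log2 (a'%:R : R).
    by rewrite -log2M ?divr_gt0 // mulfVK // gt_eqF.
  by rewrite E addrK.
Qed.
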